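(* Let $n\ge2$ and let $S_i$ ($1\le i\le n-1$) be the simple non-projective $\Gamma_n^2$-module at vertex $i$. Then the $\tau$-perpendicular category $J(S_i)$ of $S_i$ in $\mathrm{mod}\,\Gamma_n^2$ is equivalent to $\mathrm{mod}\,\Gamma_{i-1}^2\oplus\mathrm{mod}\,\Gamma_{n-i-1}^2\oplus\mathrm{mod}\,\Gamma_1^2$.
   Context: $\mathbb{F}$ is an algebraically closed field, $\mathrm{mod}\,A$ the category of finitely generated left modules over a finite dimensional algebra $A$, $\tau$ the Auslander–Reiten translation. For $\tau$-rigid $M$ (i.e. $\mathrm{Hom}(M,\tau M)=0$), $J(M)=\{X:\mathrm{Hom}(M,X)=0,\ \mathrm{Hom}(X,\tau M)=0\}$. $A_n$ is the quiver $1\to2\to\cdots\to n$, $R$ its arrow ideal, $\Gamma_n^2=\mathbb{F}A_n/R^2$ (so $\Gamma_1^2=\mathbb{F}$); $\Gamma_0^2$ is the zero algebra, with $\mathrm{mod}\,\Gamma_0^2=0$. Here the simple $S_i$ for $i\le n-1$ is non-projective, with $\tau S_i=S_{i+1}$. $\oplus$ of module categories denotes the product category, equivalent to the module category of the product algebra. *)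

(* Defs.v *)
From HB Require Import structures.
From mathcomp Require Import all_boot all_algebra.
Set Implicit Arguments. Unset Strict Implicit. Unset Printing Implicit Defensive.
Import GRing.Theory.
Local Open Scope ring_scope.

Record cat := Cat {
  ob : Type;
  hom : ob -> ob -> Type;
  heq : forall a b, hom a b -> hom a b -> Prop;
  idm : forall a, hom a a;
  comp : forall x y z, hom y z -> hom x y -> hom x z }.
Arguments heq {c a b}.
Arguments idm {c}.
Arguments comp {c x y z}.

Record functor (C D : cat) := Functor {
  fob : ob C -> ob D;
  fhom : forall a b, hom a b -> hom (fob a) (fob b);
  fresp : forall a b (f g : hom a b), heq f g -> heq (fhom f) (fhom g);
  fid : forall a, heq (fhom (idm a)) (idm (fob a));
  fcomp : forall a b c (f : hom a b) (g : hom b c),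
      heq (fhom (comp g f)) (comp (fhom g) (fhom f)) }.

Definition isomorphic (C : cat) (a b : ob C) : Prop :=
  exists (f : hom a b) (g : hom b a),
    heq (comp g f) (idm a) /\ heq (comp f g) (idm b).

Definition cat_equiv (C D : cat) : Prop :=
  exists Fu : functor C D,
    (forall a b (f g : hom a b), heq (fhom Fu f) (fhom Fu g) -> heq f g) /\
    (forall a b (h : hom (fob Fu a) (fob Fu b)), exists f, heq (fhom Fu f) h) /\
    (forall d : ob D, exists c : ob C, isomorphic (fob Fu c) d).

Definition prodcat (C D : cat) : cat :=
  @Cat (ob C * ob D)
    (fun x y => (hom x.1 y.1 * hom x.2 y.2)%type)
    (fun x y f g => heq f.1 g.1 /\ heq f.2 g.2)
    (fun x => (idm x.1, idm x.2))
    (fun x y z g f => (comp g.1 f.1, comp g.2 f.2)).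

(* Vertices 0,...,n-1 (vertex k here is vertex k+1 of the paper); arrow k -> k+1;
   linear maps are matrices acting on row vectors; relation R^2 = 0. *)
Record rep (F : fieldType) (n : nat) := Rep {
  rdim : nat -> nat;
  rmap : forall k, 'M[F]_(rdim k, rdim k.+1);
  rdim_out : forall k, (n <= k)%N -> rdim k = 0%N;
  rrel : forall k, rmap k *m rmap k.+1 = 0 }.

Record rhom (F : fieldType) (n : nat) (X Y : rep F n) := RHom {
  hmap : forall k, 'M[F]_(rdim X k, rdim Y k);
  hcomm : forall k, rmap X k *m hmap k.+1 = hmap k *m rmap Y k }.

Lemma rhom_id_comm (F : fieldType) n (X : rep F n) k :
  rmap X k *m 1%:M = 1%:M *m rmap X k.
Proof. by rewrite mulmx1 mul1mx. Qed.

Definition rhom_id (F : fieldType) n (X : rep F n) : rhom X X :=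
  @RHom F n X X (fun k => 1%:M) (rhom_id_comm X).

Lemma rhom_comp_comm (F : fieldType) n (X Y Z : rep F n)
  (g : rhom Y Z) (f : rhom X Y) k :
  rmap X k *m (hmap f k.+1 *m hmap g k.+1) = (hmap f k *m hmap g k) *m rmap Z k.
Proof. by rewrite mulmxA hcomm -!mulmxA hcomm. Qed.

Definition rhom_comp (F : fieldType) n (X Y Z : rep F n)
  (g : rhom Y Z) (f : rhom X Y) : rhom X Z :=
  @RHom F n X Z (fun k => hmap f k *m hmap g k) (rhom_comp_comm g f).

Definition rhom_eq (F : fieldType) n (X Y : rep F n) (f g : rhom X Y) : Prop :=
  forall k, hmap f k = hmap g k.

Definition rhom_zero (F : fieldType) n (X Y : rep F n) (f : rhom X Y) : Prop :=
  forall k, hmap f k = 0.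

Definition modGamma (F : fieldType) (n : nat) : cat :=
  @Cat (rep F n) (@rhom F n) (@rhom_eq F n) (@rhom_id F n) (@rhom_comp F n).

Lemma simple_out (n v k : nat) : (n <= k)%N -> nat_of_bool ((k == v) && (k < n)%N) = 0%N.
Proof. by move=> H; rewrite ltnNge H andbF. Qed.

Lemma simple_rel (F : fieldType) (d : nat -> nat) k :
  (0 : 'M[F]_(d k, d k.+1)) *m (0 : 'M[F]_(d k.+1, d k.+2)) = 0.
Proof. by rewrite mul0mx. Qed.

Definition simple_rep (F : fieldType) (n v : nat) : rep F n :=
  @Rep F n (fun k => nat_of_bool ((k == v) && (k < n)%N)) (fun k => 0)
    (@simple_out n v) (@simple_rel F _).

(* Full subcategory J(M) = {X | Hom(M,X) = 0, Hom(X, tau M) = 0}; the AR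
   translate tau M is passed explicitly as TM. *)
Definition Jperp (F : fieldType) n (M TM X : rep F n) : Prop :=
  (forall f : rhom M X, rhom_zero f) /\ (forall f : rhom X TM, rhom_zero f).

Definition Jcat (F : fieldType) n (M TM : rep F n) : cat :=
  @Cat {X : rep F n | Jperp M TM X}
    (fun X Y => rhom (proj1_sig X) (proj1_sig Y))
    (fun X Y => @rhom_eq F n (proj1_sig X) (proj1_sig Y))
    (fun X => rhom_id (proj1_sig X))
    (fun X Y Z => @rhom_comp F n (proj1_sig X) (proj1_sig Y) (proj1_sig Z)).

(* Main.v *)
Require Import Defs.
From HB Require Import structures.
From mathcomp Require Import all_boot all_algebra zify.
From Stdlib Require Import FunctionalExtensionality.
Set Implicit Arguments. Unset Strict Implicit. Unset Printing Implicit Defensive.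
Import GRing.Theory.
Local Open Scope ring_scope.

Section Ext.
Variable F : fieldType.

Definition ext m n (A : 'M[F]_(m,n)) (i j : nat) : F :=
  oapp (fun i' => oapp (fun j' => A i' j') 0 (insub j : option 'I_n)) 0
       (insub i : option 'I_m).

Lemma extE m n (A : 'M[F]_(m,n)) (i : 'I_m) (j : 'I_n) : A i j = ext A i j.
Proof. by rewrite /ext !valK. Qed.

Lemma ext_out m n (A : 'M[F]_(m,n)) (i j : nat) : ~~ ((i < m)%N && (j < n)%N) -> ext A i j = 0.
Proof.
move=> H; rewrite /ext.
case: insubP => [u Hu _|_] //=; case: insubP => [u' Hu' _|_] //=.
by rewrite Hu Hu' in H.
Qed.

Lemma mx_ext m n (A B : 'M[F]_(m,n)) :
  (forall i j, (i < m)%N -> (j < n)%N -> ext A i j = ext B i j) -> A = B.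
Proof. by move=> H; apply/matrixP => i j; rewrite !extE; apply: H. Qed.

Definition mxc m n m' n' (A : 'M[F]_(m,n)) : 'M[F]_(m',n') :=
  \matrix_(i < m', j < n') ext A i j.
Arguments mxc {m n m' n'} A.

Lemma ext_mxc m n m' n' (A : 'M[F]_(m,n)) (i j : nat) :
  ext (mxc A : 'M_(m',n')) i j = if (i < m')%N && (j < n')%N then ext A i j else 0.
Proof.
case: ifP => H; last by rewrite ext_out // H.
case/andP: H => Hi Hj.
by rewrite -[i]/(val (Ordinal Hi)) -[j]/(val (Ordinal Hj)) -extE mxE.
Qed.

Lemma ext_mxcE m n m' n' (A : 'M[F]_(m,n)) :
  (m <= m')%N -> (n <= n')%N -> ext (mxc A : 'M_(m',n')) = ext A.
Proof.
move=> H1 H2; apply: functional_extensionality => i;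
apply: functional_extensionality => j.
rewrite ext_mxc; case: ifP => // /negbT H; rewrite ext_out //.
apply: contra H => /andP [Hi Hj]; apply/andP; split; lia.
Qed.

Lemma ext_mul m n p (A : 'M[F]_(m,n)) (B : 'M[F]_(n,p)) N : (n <= N)%N ->
  ext (A *m B) = fun i j => \sum_(c < N) ext A i c * ext B c j.
Proof.
move=> HN; apply: functional_extensionality => i;
apply: functional_extensionality => j.
case: (boolP ((i < m)%N && (j < p)%N)) => H; last first.
  rewrite ext_out // big1 // => c _.
  move: H; rewrite negb_and => /orP [] H.
    by rewrite ext_out ?mul0r // negb_and H.
  by rewrite (ext_out B) ?mulr0 // negb_and H orbT.
case/andP: H => Hi Hj.
rewrite -[i]/(val (Ordinal Hi)) -[j]/(val (Ordinal Hj)) -extE mxE.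
transitivity (\sum_(c < n) ext A i c * ext B c j).
  by apply: eq_bigr => c _; rewrite !extE.
rewrite (big_ord_widen N (fun c => ext A i c * ext B c j) HN).
rewrite big_mkcond /=; apply: eq_bigr => c _.
case: ifP => Hc //.
by rewrite ext_out ?mul0r // Hc andbF.
Qed.

Lemma ext1 m (i j : nat) : ext (1%:M : 'M[F]_m) i j = ((i == j) && (i < m)%N)%:R.
Proof.
case: (boolP ((i < m)%N && (j < m)%N)) => H; last first.
  rewrite ext_out //; case: eqP => //= e; subst j.
  by move: H; rewrite andbb => /negbTE ->.
case/andP: H => Hi Hj.
by rewrite -[i]/(val (Ordinal Hi)) -[j]/(val (Ordinal Hj)) -extE mxE Hi andbT.
Qed.

Lemma ext0 m n (i j : nat) : ext (0 : 'M[F]_(m,n)) i j = 0.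
Proof.
case: (boolP ((i < m)%N && (j < n)%N)) => H; last by rewrite ext_out.
case/andP: H => Hi Hj.
by rewrite -[i]/(val (Ordinal Hi)) -[j]/(val (Ordinal Hj)) -extE mxE.
Qed.

Lemma mx_dim0 m n (A : 'M[F]_(m,n)) : (m == 0%N) || (n == 0%N) -> A = 0.
Proof.
move=> H; apply/matrixP => i j; rewrite mxE.
case: i j => i Hi [j Hj]; exfalso; case/orP: H => /eqP e; lia.
Qed.

Lemma mxc_id m n (A : 'M[F]_(m,n)) : mxc A = A.
Proof. by apply/matrixP => i j; rewrite mxE -extE. Qed.


Lemma mxc0 m n m' n' : (mxc (0 : 'M[F]_(m,n)) : 'M_(m',n')) = 0.
Proof. by apply/matrixP => i j; rewrite !mxE ext0. Qed.

Lemma mxc_mul m n p m' n' p' (A : 'M[F]_(m,n)) (B : 'M[F]_(n,p)) :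
  (n <= n')%N -> (mxc A : 'M_(m',n')) *m (mxc B : 'M_(n',p')) = mxc (A *m B).
Proof.
move=> H; apply: mx_ext => i j Hi Hj.
rewrite ext_mxc Hi Hj /= (ext_mul _ _ (leqnn n')) (ext_mul _ _ H).
by apply: eq_bigr => c _; rewrite !ext_mxc Hi Hj ltn_ord.
Qed.

Lemma mxcK m n m1 n1 m2 n2 (A : 'M[F]_(m,n)) :
  (m <= m1)%N -> (n <= n1)%N -> (mxc (mxc A : 'M_(m1,n1)) : 'M_(m2,n2)) = mxc A.
Proof.
move=> H1 H2; apply: mx_ext => i j Hi Hj.
by rewrite (@ext_mxc m1 n1 m2 n2 (mxc A)) (ext_mxcE A H1 H2) ext_mxc.
Qed.

Lemma mxc_inj m n m1 n1 (A B : 'M[F]_(m,n)) :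
  (m <= m1)%N -> (n <= n1)%N -> (mxc A : 'M_(m1,n1)) = mxc B -> A = B.
Proof.
move=> H1 H2 e.
have := congr1 (fun M => mxc M : 'M_(m,n)) e.
by rewrite !mxcK // !mxc_id.
Qed.

Lemma mxc1 m m' : (m' <= m)%N -> (mxc (1%:M : 'M[F]_m) : 'M_m') = 1%:M.
Proof.
move=> H; apply: mx_ext => i j Hi Hj.
rewrite ext_mxc Hi Hj /= !ext1; congr (_%:R).
case: eqP => //= _; by rewrite Hi (leq_trans Hi H).
Qed.

Lemma mul_mxc1 m n p r (A : 'M[F]_(m,n)) :
  (n <= r)%N -> A *m (mxc (1%:M : 'M_r) : 'M_(n,p)) = mxc A.
Proof.
move=> H; apply: mx_ext => i j Hi Hj.
rewrite ext_mxc Hi Hj /= (ext_mul _ _ (leqnn n)).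
under eq_bigr => c _ do rewrite ext_mxc ext1 ltn_ord Hj /=.
case: (ltnP j n) => Hjn.
  rewrite (bigD1 (Ordinal Hjn)) //= eqxx /= (_ : (j < r)%N) ?mulr1; last by lia.
  rewrite big1 ?addr0 // => c /eqP Hc.
  case: eqP => [e|]; last by rewrite mulr0.
  by exfalso; apply: Hc; apply: val_inj.
rewrite [RHS]ext_out; last by rewrite negb_and; apply/orP; right; rewrite -leqNgt.
rewrite big1 // => c _.
case: eqP => [e|]; last by rewrite mulr0.
have := ltn_ord c; rewrite e; lia.
Qed.

Lemma ext_tr m n (A : 'M[F]_(m,n)) (i j : nat) : ext A^T i j = ext A j i.
Proof.
case: (boolP ((j < m)%N && (i < n)%N)) => Hij; last first.
  rewrite !ext_out //; move: Hij; rewrite !negb_and orbC //.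
case/andP: Hij => Hj Hi.
by rewrite -[j]/(val (Ordinal Hj)) -[i]/(val (Ordinal Hi)) -!extE mxE.
Qed.

Lemma mxc1_mul m n p r (A : 'M[F]_(m,n)) :
  (m <= r)%N -> (mxc (1%:M : 'M_r) : 'M_(p,m)) *m A = mxc A.
Proof.
move=> H; apply: (can_inj (@trmxK _ _ _)).
rewrite trmx_mul.
have -> : (mxc (1%:M : 'M_r) : 'M_(p,m))^T = mxc (1%:M : 'M_r).
  apply/matrixP => i j; rewrite !mxE !ext1; congr (_%:R).
  by rewrite eq_sym; case: eqP => [->|] //=.
rewrite mul_mxc1 //; apply/matrixP => i j; rewrite !mxE ext_tr //.
Qed.

Lemma mx_dim0_eq m n (A B : 'M[F]_(m,n)) : (m == 0%N) || (n == 0%N) -> A = B.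
Proof. by move=> H; rewrite (mx_dim0 A H) (mx_dim0 B H). Qed.

Lemma mxc_congr (T : Type) (d1 d2 : T -> nat) (M : forall x, 'M[F]_(d1 x, d2 x))
  x y m' n' : x = y -> (mxc (M x) : 'M_(m',n')) = mxc (M y).
Proof. by move=> ->. Qed.

End Ext.

Arguments mxc {F m n m' n'} A : simpl never.
Arguments ext : simpl never.
Section Main.
Variable F : fieldType.
Variables n v : nat.
Hypothesis Hv : (v.+2 <= n)%N.

Definition dL (X : rep F n) k := if (k < v)%N then rdim X k else 0%N.

Lemma outL (X : rep F n) k : (v <= k)%N -> dL X k = 0%N.
Proof. by rewrite /dL ltnNge => ->. Qed.

Lemma dL_le (X : rep F n) k : (dL X k <= rdim X k)%N.
Proof. by rewrite /dL; case: ifP. Qed.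

Lemma relL (X : rep F n) k :
  (mxc (rmap X k) : 'M_(dL X k, dL X k.+1)) *m (mxc (rmap X k.+1) : 'M_(dL X k.+1, dL X k.+2)) = 0.
Proof.
case: (ltnP k.+2 v) => Hk.
  by rewrite mxc_mul ?rrel ?mxc0 // /dL (ltnW Hk).
by apply: mx_dim0; rewrite (outL X Hk) eqxx orbT.
Qed.

Definition resL (X : rep F n) : rep F v :=
  @Rep F v (dL X) (fun k => mxc (rmap X k)) (@outL X) (@relL X).

Lemma commL (X Y : rep F n) (f : rhom X Y) k :
  rmap (resL X) k *m (mxc (hmap f k.+1) : 'M_(dL X k.+1, dL Y k.+1))
  = (mxc (hmap f k) : 'M_(dL X k, dL Y k)) *m rmap (resL Y) k.
Proof.
rewrite /=; case: (ltnP k.+1 v) => Hk.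
  by rewrite !mxc_mul ?hcomm // /dL ?Hk ?(ltnW Hk).
by apply: mx_dim0_eq; rewrite (outL Y Hk) eqxx orbT.
Qed.

Definition homL (X Y : rep F n) (f : rhom X Y) : rhom (resL X) (resL Y) :=
  @RHom F v (resL X) (resL Y) (fun k => mxc (hmap f k)) (@commL X Y f).

Definition w := (n - v.+2)%N.

Lemma outR (X : rep F n) k : (w <= k)%N -> rdim X (k + v.+2) = 0%N.
Proof. move=> H; apply: rdim_out; rewrite /w in H; lia. Qed.

Definition resR (X : rep F n) : rep F w :=
  @Rep F w (fun k => rdim X (k + v.+2)) (fun k => rmap X (k + v.+2)) (@outR X)
    (fun k => rrel X (k + v.+2)).

Definition homR (X Y : rep F n) (f : rhom X Y) : rhom (resR X) (resR Y) :=
  @RHom F w (resR X) (resR Y) (fun k => hmap f (k + v.+2)) (fun k => hcomm f (k + v.+2)).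

Definition dM (X : rep F n) k := if k is 0 then rdim X v else 0%N.

Lemma outM (X : rep F n) k : (1 <= k)%N -> dM X k = 0%N.
Proof. by case: k. Qed.

Lemma relM (X : rep F n) k :
  (0 : 'M[F]_(dM X k, dM X k.+1)) *m (0 : 'M[F]_(dM X k.+1, dM X k.+2)) = 0.
Proof. by rewrite mul0mx. Qed.

Definition resM (X : rep F n) : rep F 1 :=
  @Rep F 1 (dM X) (fun k => 0) (@outM X) (@relM X).

Definition hM (X Y : rep F n) (f : rhom X Y) k : 'M[F]_(dM X k, dM Y k) :=
  match k with 0 => hmap f v | _.+1 => 0 end.

Lemma commM (X Y : rep F n) (f : rhom X Y) k :
  rmap (resM X) k *m hM f k.+1 = hM f k *m rmap (resM Y) k.
Proof. by rewrite /= mul0mx mulmx0. Qed.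

Definition homM (X Y : rep F n) (f : rhom X Y) : rhom (resM X) (resM Y) :=
  @RHom F 1 (resM X) (resM Y) (hM f) (@commM X Y f).


Notation S := (simple_rep F n v).
Notation T := (simple_rep F n v.+1).

Lemma J_free (X : rep F n) : Jperp S T X -> row_free (rmap X v) /\ row_full (rmap X v).
Proof.
case=> J1 J2; split.
  apply: inj_row_free => x Hx.
  have hc : forall k, rmap S k *m (if k.+1 == v then mxc x else 0)
                   = (if k == v then mxc x else 0) *m rmap X k.
    move=> k; rewrite /= mul0mx; case: eqP => [e|_]; last by rewrite mul0mx.
    subst k; rewrite -[rmap X v](mxc_id (rmap X v)) mxc_mul // Hx mxc0 //.
  have := J1 (@RHom F n S X (fun k => if k == v then mxc x else 0) hc) v.
  rewrite /= (ifT _ _ (eqxx v)) => H0.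
  apply: (@mxc_inj _ _ _ (rdim S v) (rdim X v)).
  - by rewrite /= eqxx (ltnW Hv).
  - by [].
  - by rewrite H0 mxc0.
have -> : row_full (rmap X v) = row_free (rmap X v)^T.
  by rewrite /row_free /row_full mxrank_tr.
apply: inj_row_free => y Hy.
have hc : forall k, rmap X k *m (if k.+1 == v.+1 then mxc y^T else 0)
                 = (if k == v.+1 then mxc y^T else 0) *m rmap T k.
  move=> k; rewrite /= mulmx0; case: eqP => [e|_]; last by rewrite mulmx0.
  move: e => [e]; subst k.
  rewrite -[rmap X v](mxc_id (rmap X v)) mxc_mul //.
  by rewrite -[rmap X v]trmxK -trmx_mul Hy trmx0 mxc0.
have := J2 (@RHom F n X T (fun k => if k == v.+1 then mxc y^T else 0) hc) v.+1.
rewrite /= (ifT _ _ (eqxx v.+1)) => H0.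
apply: trmx_inj; rewrite trmx0.
apply: (@mxc_inj _ _ _ (rdim X v.+1) (rdim T v.+1)).
- by [].
- by rewrite /= eqxx Hv.
- by rewrite H0 mxc0.
Qed.


Lemma free_J (X : rep F n) : row_free (rmap X v) -> row_full (rmap X v) -> Jperp S T X.
Proof.
move=> Hfree Hfull; split.
  move=> f k; case: (eqVneq k v) => [e|ne].
    subst k; have := hcomm f v; rewrite /= mul0mx => /esym/eqP.
    by rewrite mulmx_free_eq0 // => /eqP.
  by apply: mx_dim0; rewrite /= (negbTE ne).
move=> g k; case: (eqVneq k v.+1) => [e|ne].
  subst k; have := hcomm g v; rewrite /= mulmx0.
  case/row_fullP: Hfull => B HB e.
  by rewrite -[hmap g v.+1]mul1mx -HB -mulmxA e mulmx0.
by apply: mx_dim0; rewrite /= (negbTE ne) orbT.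
Qed.


Definition Jc := Jcat S T.
Definition Dc := prodcat (prodcat (modGamma F v) (modGamma F w)) (modGamma F 1).

Definition Fob (X : ob Jc) : ob Dc :=
  ((resL (proj1_sig X), resR (proj1_sig X)), resM (proj1_sig X)).

Definition Fhom (X Y : ob Jc) (f : Defs.hom X Y) : Defs.hom (Fob X) (Fob Y) :=
  ((homL f, homR f), homM f).

Lemma Fresp (X Y : ob Jc) (f g : Defs.hom X Y) : heq f g -> heq (Fhom f) (Fhom g).
Proof.
move=> e; split; first split.
- by move=> k /=; rewrite e.
- by move=> k /=; rewrite e.
- by case=> [|k] //=; rewrite e.
Qed.

Lemma Fid (X : ob Jc) : heq (Fhom (idm X)) (idm (Fob X)).
Proof.
split; first split.
- by move=> k /=; rewrite mxc1 // dL_le.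
- by [].
- by case=> [|k] //=; apply: mx_dim0_eq.
Qed.

Lemma Fcomp (X Y Z : ob Jc) (f : Defs.hom X Y) (g : Defs.hom Y Z) :
  heq (Fhom (Defs.comp g f)) (Defs.comp (Fhom g) (Fhom f)).
Proof.
split; first split.
- move=> k /=; case: (ltnP k v) => Hk.
    by rewrite mxc_mul // /dL Hk.
  by apply: mx_dim0_eq; rewrite (outL _ Hk).
- by [].
- by case=> [|k] //=; apply: mx_dim0_eq.
Qed.

Definition Fu : functor Jc Dc := @Functor Jc Dc Fob Fhom Fresp Fid Fcomp.


Lemma Ffaith (X Y : ob Jc) (f g : Defs.hom X Y) : heq (Fhom f) (Fhom g) -> heq f g.
Proof.
move: X Y f g => [X HX] [Y HY] f g /= [[HL HR] HM] k.
case: (ltnP k v) => H1.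
  apply: (@mxc_inj _ _ _ (dL X k) (dL Y k)); [by rewrite /dL H1|by rewrite /dL H1|].
  exact: HL k.
case: (eqVneq k v) => [e|ne].
  by subst k; exact: HM 0%N.
case: (eqVneq k v.+1) => [e|ne2].
  subst k; have [_ Ff] := J_free HX; apply: (row_full_inj Ff).
  by rewrite !hcomm; congr (_ *m _); exact: HM 0%N.
have -> : k = ((k - v.+2) + v.+2)%N by move/eqP: ne; move/eqP: ne2; lia.
exact: HR.
Qed.


Lemma pre_zero (X : rep F n) k : row_free (rmap X k.+1) -> rmap X k = 0.
Proof. by move=> H; apply/eqP; rewrite -(mulmx_free_eq0 _ H) rrel. Qed.

Lemma post_zero (X : rep F n) k : row_full (rmap X k) -> rmap X k.+1 = 0.
Proof.
case/row_fullP => B HB.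
by rewrite -[rmap X k.+1]mul1mx -HB -mulmxA rrel mulmx0.
Qed.

Definition hfull (X Y : rep F n) (hL : rhom (resL X) (resL Y))
  (hR : rhom (resR X) (resR Y)) (hm : rhom (resM X) (resM Y))
  (B : 'M[F]_(rdim X v.+1, rdim X v)) k : 'M[F]_(rdim X k, rdim Y k) :=
  if (k < v)%N then mxc (hmap hL k)
  else if k == v then mxc (hmap hm 0)
  else if k == v.+1 then mxc (B *m hmap hm 0 *m rmap Y v)
  else mxc (hmap hR (k - v.+2)).

Lemma hfull_comm (X Y : rep F n) (hL : rhom (resL X) (resL Y))
  (hR : rhom (resR X) (resR Y)) (hm : rhom (resM X) (resM Y))
  (B : 'M[F]_(rdim X v.+1, rdim X v)) :
  row_free (rmap X v) -> row_full (rmap X v) ->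
  row_free (rmap Y v) -> row_full (rmap Y v) ->
  rmap X v *m B = 1%:M -> 
  forall k, rmap X k *m hfull hL hR hm B k.+1 = hfull hL hR hm B k *m rmap Y k.
Proof.
move=> FX1 FX2 FY1 FY2 HAB k.
case: (ltnP k.+1 v) => Hk.
  rewrite /hfull Hk (ltnW Hk).
  have E := hcomm hL k.
  apply: mx_ext => a b Ha Hb.
  have := congr1 (fun M => ext M a b) E.
  have l1 : (rdim X k <= dL X k)%N by rewrite /dL (ltnW Hk).
  have l2 : (rdim X k.+1 <= dL X k.+1)%N by rewrite /dL Hk.
  have l3 : (rdim Y k <= dL Y k)%N by rewrite /dL (ltnW Hk).
  have l4 : (rdim Y k.+1 <= dL Y k.+1)%N by rewrite /dL Hk.
  rewrite /= (ext_mul _ _ (dL_le X k.+1)) (ext_mul _ _ (dL_le Y k)).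
  rewrite (ext_mxcE (rmap X k) l1 l2) (ext_mxcE (rmap Y k) l3 l4) => E2.
  rewrite (ext_mul _ _ (leqnn _)) (ext_mul _ _ (leqnn _)).
  by rewrite (ext_mxcE (hmap hL k.+1) (dL_le X k.+1) (dL_le Y k.+1))
             (ext_mxcE (hmap hL k) (dL_le X k) (dL_le Y k)).
case: (eqVneq k.+1 v) => [e|ne].
  have rX : rmap X k = 0 by apply: pre_zero; rewrite e.
  have rY : rmap Y k = 0 by apply: pre_zero; rewrite e.
  by rewrite rX rY mul0mx mulmx0.
case: (eqVneq k v) => [e|ne2].
  subst k.
  have c1 : (v.+1 < v)%N = false by lia.
  have c2 : (v.+1 == v) = false by lia.
  rewrite /hfull c1 c2 !eqxx ltnn !mxc_id.
  by rewrite !mulmxA HAB mul1mx.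
case: (eqVneq k v.+1) => [e|ne3].
  subst k.
  by rewrite (post_zero FX2) (post_zero FY2) mul0mx mulmx0.
have [j ->] : exists j, k = (j + v.+2)%N.
  by exists (k - v.+2)%N; move/eqP: ne; move/eqP: ne2; move/eqP: ne3; lia.
have c1 : ((j + v.+2).+1 < v)%N = false by lia.
have c2 : ((j + v.+2).+1 == v) = false by lia.
have c3 : ((j + v.+2).+1 == v.+1) = false by lia.
have c4 : ((j + v.+2) < v)%N = false by lia.
have c5 : ((j + v.+2) == v) = false by lia.
have c6 : ((j + v.+2) == v.+1) = false by lia.
rewrite /hfull c1 c2 c3 c4 c5 c6.
rewrite (@mxc_congr _ _ _ _ (hmap hR) ((j + v.+2).+1 - v.+2)%N j.+1); last by lia.
rewrite (@mxc_congr _ _ _ _ (hmap hR) (j + v.+2 - v.+2)%N j); last by lia.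
rewrite !mxc_id.
exact: hcomm hR j.
Qed.


Lemma Ffull (X Y : ob Jc) (h : Defs.hom (Fob X) (Fob Y)) : exists f, heq (Fhom f) h.
Proof.
move: X Y h => [X HX] [Y HY] [[hL hR] hm] /=.
have [FX1 FX2] := J_free HX; have [FY1 FY2] := J_free HY.
have [B HB] := row_fullP FX2; have [C HC] := row_freeP FX1.
have HAB : rmap X v *m B = 1%:M.
  have -> : B = C by rewrite -[B]mulmx1 -HC mulmxA HB mul1mx.
  exact: HC.
exists (@RHom F n X Y (hfull hL hR hm B) (hfull_comm hL hR hm FX1 FX2 FY1 FY2 HAB)).
split; first split.
- move=> k /=; rewrite /hfull; case: (ltnP k v) => Hk.
    by rewrite mxcK ?dL_le // mxc_id.
  by apply: mx_dim0_eq; rewrite (outL _ Hk).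
- move=> k /=.
  have c4 : ((k + v.+2) < v)%N = false by lia.
  have c5 : ((k + v.+2) == v) = false by lia.
  have c6 : ((k + v.+2) == v.+1) = false by lia.
  rewrite /hfull c4 c5 c6.
  rewrite (@mxc_congr _ _ _ _ (hmap hR) (k + v.+2 - v.+2)%N k); last by lia.
  by rewrite mxc_id.
- case=> [|k] /=.
    by rewrite /hfull ltnn eqxx mxc_id.
  by apply: mx_dim0_eq.
Qed.


Lemma iso_of (m : nat) (P Q : rep F m) :
  (forall k, rdim P k = rdim Q k) -> (forall k, mxc (rmap P k) = rmap Q k) ->
  @isomorphic (modGamma F m) P Q.
Proof.
move=> Hd Hm.
have le1 k : (rdim P k <= rdim Q k)%N by rewrite Hd.
have le2 k : (rdim Q k <= rdim P k)%N by rewrite Hd.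
have cf : forall k, rmap P k *m (mxc (1%:M : 'M_(rdim Q k.+1)) : 'M_(rdim P k.+1, rdim Q k.+1))
   = (mxc (1%:M : 'M_(rdim Q k)) : 'M_(rdim P k, rdim Q k)) *m rmap Q k.
  move=> k; rewrite mul_mxc1 // mxc1_mul // -Hm mxcK //.
have cg : forall k, rmap Q k *m (mxc (1%:M : 'M_(rdim Q k.+1)) : 'M_(rdim Q k.+1, rdim P k.+1))
   = (mxc (1%:M : 'M_(rdim Q k)) : 'M_(rdim Q k, rdim P k)) *m rmap P k.
  move=> k; rewrite mul_mxc1 // mxc1_mul // -Hm mxcK //.
exists (@RHom F m P Q _ cf); exists (@RHom F m Q P _ cg); split => k /=.
  by rewrite mxc_mul // mulmx1 mxc1.
by rewrite mxc_mul // mulmx1 mxc1.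
Qed.

Lemma iso_prod (C1 C2 : Defs.cat) (a b : ob C1) (a2 b2 : ob C2) :
  isomorphic a b -> isomorphic a2 b2 -> @isomorphic (prodcat C1 C2) (a, a2) (b, b2).
Proof.
move=> [f [g [H1 H2]]] [f' [g' [H1' H2']]].
by exists (f, f'); exists (g, g'); split; split.
Qed.


Section Build.
Variables (A : rep F v) (B : rep F w) (C : rep F 1).

Definition dX k : nat :=
  if (k < v)%N then rdim A k else if k == v then rdim C 0
  else if k == v.+1 then rdim C 0 else rdim B (k - v.+2).

Definition mX k : 'M[F]_(dX k, dX k.+1) :=
  if (k.+1 < v)%N then mxc (rmap A k)
  else if k == v then mxc (1%:M : 'M_(rdim C 0))
  else if (v.+1 < k)%N then mxc (rmap B (k - v.+2)) else 0.

Lemma outX k : (n <= k)%N -> dX k = 0%N.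
Proof.
move=> H; rewrite /dX.
have -> : (k < v)%N = false by lia.
have -> : (k == v) = false by lia.
have -> : (k == v.+1) = false by lia.
by apply: rdim_out; rewrite /w; lia.
Qed.

Lemma mX0 k : (v <= k.+1)%N -> k != v -> (k <= v.+1)%N -> mX k = 0.
Proof.
move=> H1 H2 H3; rewrite /mX.
have -> : (k.+1 < v)%N = false by lia.
have -> : (v.+1 < k)%N = false by lia.
by rewrite (negbTE H2).
Qed.

Lemma relX k : mX k *m mX k.+1 = 0.
Proof.
case: (ltnP k.+2 v) => H1.
  rewrite /mX H1 (ltnW H1) mxc_mul ?rrel ?mxc0 //.
  by rewrite /dX (ltnW H1).
case: (ltnP k v.+2) => H2.
  case: (eqVneq k v) => [e|ne].
    by rewrite (@mX0 k.+1) ?mulmx0 //; lia.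
  case: (eqVneq k.+2 v) => [e2|ne2].
    by rewrite (@mX0 k.+1) ?mulmx0 //; lia.
  by rewrite (@mX0 k) ?mul0mx //; lia.
have [j ->] : exists j, k = (j + v.+2)%N by exists (k - v.+2)%N; lia.
rewrite /mX.
have -> : ((j + v.+2).+1 < v)%N = false by lia.
have -> : ((j + v.+2).+2 < v)%N = false by lia.
have -> : ((j + v.+2) == v) = false by lia.
have -> : ((j + v.+2).+1 == v) = false by lia.
have -> : (v.+1 < j + v.+2)%N by lia.
have -> : (v.+1 < (j + v.+2).+1)%N by lia.
rewrite (@mxc_congr _ _ (rdim B) (fun x => rdim B x.+1) (rmap B) (j + v.+2 - v.+2)%N j); last by lia.
rewrite (@mxc_congr _ _ (rdim B) (fun x => rdim B x.+1) (rmap B) ((j + v.+2).+1 - v.+2)%N j.+1); last by lia.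
rewrite mxc_mul ?rrel ?mxc0 //.
rewrite /dX.
have -> : ((j + v.+2).+1 < v)%N = false by lia.
have -> : ((j + v.+2).+1 == v) = false by lia.
have -> : ((j + v.+2).+1 == v.+1) = false by lia.
by have -> : ((j + v.+2).+1 - v.+2)%N = j.+1 by lia.
Qed.

Definition repX : rep F n := @Rep F n dX mX outX relX.

End Build.


Lemma repX_J (A : rep F v) (B : rep F w) (C : rep F 1) : Jperp S T (repX A B C).
Proof.
have c1 : (v.+1 < v)%N = false by lia.
have c2 : (v.+1 == v) = false by lia.
have d1 : dX A B C v = rdim C 0 by rewrite /dX ltnn eqxx.
have d2 : dX A B C v.+1 = rdim C 0 by rewrite /dX c1 c2 eqxx.
have e : rmap (repX A B C) v = mxc (1%:M : 'M_(rdim C 0)).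
  by rewrite /= /mX c1 eqxx.
apply: free_J; rewrite e.
  apply/row_freeP; exists (mxc (1%:M : 'M_(rdim C 0))).
  rewrite mxc_mul; last by rewrite /= d2.
  by rewrite mulmx1 mxc1 // /= d1.
apply/row_fullP; exists (mxc (1%:M : 'M_(rdim C 0))).
rewrite mxc_mul; last by rewrite /= d1.
by rewrite mulmx1 mxc1 // /= d2.
Qed.

Lemma Fess (d : ob Dc) : exists c : ob Jc, isomorphic (Fob c) d.
Proof.
move: d => [[A B] C].
exists (exist _ (repX A B C) (repX_J A B C)).
rewrite /Fob /=.
apply: iso_prod; first apply: iso_prod.
- apply: iso_of.
    move=> k; change (dL (repX A B C) k = rdim A k); rewrite /dL.
    case: (ltnP k v) => H; last by rewrite (rdim_out A H).
    by change (dX A B C k = rdim A k); rewrite /dX H.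
  move=> k /=; case: (ltnP k.+1 v) => Hk.
    change (mxc (mxc (mX A B C k) : 'M_(dL (repX A B C) k, dL (repX A B C) k.+1)) = rmap A k).
    rewrite /mX Hk mxcK; last 2 first.
    - by rewrite /dL (ltnW Hk); exact: leqnn.
    - by rewrite /dL Hk; exact: leqnn.
    rewrite mxcK ?mxc_id //.
    - by rewrite /dX (ltnW Hk).
    - by rewrite /dX Hk.
  by apply: mx_dim0_eq; rewrite (rdim_out A Hk) eqxx orbT.
- apply: iso_of.
    move=> k; rewrite /= /dX.
    have -> : ((k + v.+2) < v)%N = false by lia.
    have -> : ((k + v.+2) == v) = false by lia.
    have -> : ((k + v.+2) == v.+1) = false by lia.
    by rewrite addnK.
  move=> k /=; rewrite /mX.
  have -> : ((k + v.+2).+1 < v)%N = false by lia.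
  have -> : ((k + v.+2) == v) = false by lia.
  have -> : (v.+1 < k + v.+2)%N by lia.
  rewrite mxcK.
  + rewrite (@mxc_congr _ _ (rdim B) (fun x => rdim B x.+1) (rmap B) (k + v.+2 - v.+2)%N k); last by lia.
    by rewrite mxc_id.
  + rewrite /dX.
    have -> : ((k + v.+2) < v)%N = false by lia.
    have -> : ((k + v.+2) == v) = false by lia.
    have -> : ((k + v.+2) == v.+1) = false by lia.
    by [].
  + rewrite /dX.
    have -> : ((k + v.+2).+1 < v)%N = false by lia.
    have -> : ((k + v.+2).+1 == v) = false by lia.
    have -> : ((k + v.+2).+1 == v.+1) = false by lia.
    by have -> : (k.+1 + v.+2 - v.+2)%N = (k + v.+2 - v.+2).+1 by lia.
- apply: iso_of.
    case=> [|k] /=; first by rewrite /dX ltnn eqxx.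
    by rewrite rdim_out.
  move=> k /=; rewrite mxc0; apply: mx_dim0_eq.
  by rewrite (rdim_out C (ltn0Sn k)) eqxx orbT.
Qed.

End Main.

Theorem proposition4p2 (F : closedFieldType) (n i : nat) :
  (2 <= n)%N -> (1 <= i)%N -> (i <= n - 1)%N ->
  cat_equiv (Jcat (simple_rep F n (i - 1)) (simple_rep F n i))
    (prodcat (prodcat (modGamma F (i - 1)) (modGamma F (n - i - 1)))
             (modGamma F 1)).
Proof.
case: i => [//|v] _ H2 H3.
have Hv : (v.+2 <= n)%N by lia.
have -> : (v.+1 - 1)%N = v by lia.
have -> : (n - v.+1 - 1)%N = w n v by rewrite /w; lia.
exists (@Fu F n v Hv); split; first by move=> a b f g; apply: Ffaith.
split; first by move=> a b h; apply: Ffull.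
exact: Fess.
Qed.
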